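(* For every unitary $U$ on $\mathbb C^2\otimes\mathbb C^2$ and every unit vector $|\beta\rangle\in\mathbb C^2$, there exists a unit vector $|\alpha\rangle\in\mathbb C^2$ and density operators $\alpha',\beta'$ on $\mathbb C^2$ such that $U(|\alpha\rangle\langle\alpha|\otimes|\beta\rangle\langle\beta|)U^\dagger=\alpha'\otimes\beta'$. *)

(* Defs.v *)
From HB Require Import structures.
From mathcomp Require Import all_boot all_order all_algebra.
From mathcomp Require Import spectral.
From mathcomp Require Import complex mxtens.
From mathcomp Require Import reals.

Set Implicit Arguments.
Unset Strict Implicit.
Unset Printing Implicit Defensive.

Import Order.TTheory GRing.Theory Num.Theory.
Local Open Scope ring_scope.
Local Open Scope sesquilinear_scope.

Definition adj {C : numClosedFieldType} {m n} (A : 'M[C]_(m, n)) : 'M[C]_(n, m) :=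
  A ^t*.

Definition unit_vec {C : numClosedFieldType} {n} (v : 'cV[C]_n) : Prop :=
  (adj v *m v) 0 0 = 1.

Definition ketbra {C : numClosedFieldType} {n} (v : 'cV[C]_n) : 'M[C]_n :=
  v *m adj v.

Definition density {C : numClosedFieldType} {n} (A : 'M[C]_n) : Prop :=
  [/\ adj A = A,
      (forall x : 'cV[C]_n, 0 <= (adj x *m A *m x) 0 0)
    & \tr A = 1].

(* Main.v *)
Require Import Defs.
From HB Require Import structures.
From mathcomp Require Import all_boot all_order all_algebra.
From mathcomp Require Import spectral.
From mathcomp Require Import complex mxtens.
From mathcomp Require Import reals.
From mathcomp Require Import ring.
Import Order.TTheory GRing.Theory Num.Theory.
Local Open Scope ring_scope.
Set Implicit Arguments.
Unset Strict Implicit.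
Unset Printing Implicit Defensive.

Section G.
Variable C : numClosedFieldType.

Lemma adj_tens m n p q (A : 'M[C]_(m,n)) (B : 'M[C]_(p,q)) :
  adj (A *t B) = adj A *t adj B.
Proof. by apply/matrixP=> i j; rewrite /adj !mxE rmorphM. Qed.

Lemma adj_mul m n p (A : 'M[C]_(m,n)) (B : 'M[C]_(n,p)) :
  adj (A *m B) = adj B *m adj A.
Proof. by rewrite /adj trmx_mul map_mxM. Qed.

Lemma adjK m n (A : 'M[C]_(m,n)) : adj (adj A) = A.
Proof. by rewrite /adj trmxCK. Qed.

Lemma ketbra_tens m n (a : 'cV[C]_m) (b : 'cV[C]_n) :
  ketbra (a *t b) = ketbra a *t ketbra b.
Proof. have E := adj_tens a b. rewrite /ketbra -tensmx_mul -E //. Qed.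

Lemma ketbra_mul m n (U : 'M[C]_(m,n)) (v : 'cV[C]_n) :
  ketbra (U *m v) = U *m ketbra v *m adj U.
Proof. by rewrite /ketbra adj_mul !mulmxA. Qed.

Lemma adjZ m n (c : C) (A : 'M[C]_(m,n)) : adj (c *: A) = c^* *: adj A.
Proof. by apply/matrixP=> i j; rewrite /adj !mxE rmorphM. Qed.

Lemma tens11 (A B : 'M[C]_1) : (A *t B) 0 0 = A 0 0 * B 0 0.
Proof.
rewrite mxE; case: (mxtens_unindex _) => x y /=.
by rewrite [x]ord1 [y]ord1.
Qed.

Lemma mx11_mul (A : 'M[C]_1) n (x : 'rV[C]_n) (y : 'cV[C]_n): True.
Proof. by []. Qed.

Lemma norm_ge0 n (a : 'cV[C]_n) : 0 <= (adj a *m a) 0 0.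
Proof.
rewrite mxE; apply: sumr_ge0 => i _; rewrite /adj !mxE mulrC.
exact: mul_conjC_ge0.
Qed.

Lemma tensZ m n p q (c d : C) (A : 'M[C]_(m,n)) (B : 'M[C]_(p,q)) :
  (c *: A) *t (d *: B) = (c * d) *: (A *t B).
Proof. by apply/matrixP=> i j; rewrite !mxE; ring. Qed.

Lemma tensDl m n p q (A A' : 'M[C]_(m,n)) (B : 'M[C]_(p,q)) :
  (A + A') *t B = A *t B + A' *t B.
Proof. by apply/matrixP=> i j; rewrite !mxE mulrDl. Qed.

Lemma tensZl m n p q (c : C) (A : 'M[C]_(m,n)) (B : 'M[C]_(p,q)) :
  (c *: A) *t B = c *: (A *t B).
Proof. by apply/matrixP=> i j; rewrite !mxE mulrA. Qed.

Lemma density_scale n (c : C) (a : 'cV[C]_n) :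
  0 <= c -> c * (adj a *m a) 0 0 = 1 -> density (c *: ketbra a).
Proof.
move=> c0 hc; split.
- by rewrite adjZ geC0_conj // /ketbra adj_mul adjK.
- move=> x; rewrite /ketbra -scalemxAr -scalemxAl mxE.
  apply: mulr_ge0 => //.
  have E : adj a *m x = adj (adj x *m a) by rewrite adj_mul adjK.
  rewrite !mulmxA -[_ *m adj a *m x]mulmxA E.
  set y := adj x *m a.
  rewrite mxE big_ord1 /adj !mxE; exact: mul_conjC_ge0.
- rewrite mxtraceZ /ketbra mxtrace_mulC /mxtrace big_ord1 hc //.
Qed.

Definition vec2 (p q : C) : 'cV[C]_2 := \col_(i < 2) (if (i : nat) == 0%N then p else q).

Lemma ord2 (i : 'I_2) : i = 0 \/ i = 1.
Proof. by case: i => [[|[|//]] Hi]; [left|right]; apply: val_inj. Qed.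

Lemma decomp (w : 'cV[C]_(2*2)) :
  let x i j := w (mxtens_index (i,j)) 0 in
  x 0 0 * x 1 1 = x 0 1 * x 1 0 -> exists a b : 'cV[C]_2, w = a *t b.
Proof.
move=> x h.
have key : forall a b : 'cV[C]_2, (forall i j, x i j = a i 0 * b j 0) -> w = a *t b.
  move=> a b H; apply/matrixP => k l; case: (mxtens_indexP k) => i j.
  have -> : l = mxtens_index (0 : 'I_1, 0 : 'I_1) by apply: val_inj; rewrite [l]ord1.
  by rewrite mxE !mxtens_indexK -H /x /=; congr (w _ _); apply: val_inj.
have [h0|h0] := eqVneq (x 0 0) 0.
  have [h1|h1] := eqVneq (x 0 1) 0.
    exists (vec2 0 1), (vec2 (x 1 0) (x 1 1)); apply: key => i j.
    by case: (ord2 i) => ->; case: (ord2 j) => ->; rewrite !mxE /= ?h0 ?h1 ?mul0r ?mul1r.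
  exists (vec2 1 (x 1 1 / x 0 1)), (vec2 0 (x 0 1)); apply: key => i j.
  have h10 : x 1 0 = 0.
    by move: h; rewrite h0 mul0r => /esym /eqP; rewrite mulf_eq0 (negbTE h1) => /eqP.
  case: (ord2 i) => ->; case: (ord2 j) => ->; rewrite !mxE /= ?h0 ?h10 ?mul1r ?mulr0 //.
  by rewrite divfK.
exists (vec2 1 (x 1 0 / x 0 0)), (vec2 (x 0 0) (x 0 1)); apply: key => i j.
case: (ord2 i) => ->; case: (ord2 j) => ->; rewrite !mxE /= ?mul1r //.
  by rewrite divfK.
by rewrite mulrAC [x 1 0 * _]mulrC -h mulrAC divff // mul1r.
Qed.

Lemma quad_root (A B D : C) : exists s t : C, (s != 0) || (t != 0) /\
  A * s ^+ 2 + B * s * t + D * t ^+ 2 = 0.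
Proof.
have [->|hA] := eqVneq A 0.
  by exists 1, 0; rewrite oner_neq0; split => //; ring.
set r := sqrtC (B ^+ 2 - 4 * A * D).
have hr : r ^+ 2 = B ^+ 2 - 4 * A * D by rewrite sqrtCK.
exists ((r - B) / (2 * A)), 1; rewrite oner_neq0 orbT; split => //.
have h2 : (2 : C) != 0 by rewrite pnatr_eq0.
rewrite -[X in X = 0]/(A * ((r - B) / (2 * A)) ^+ 2 + B * ((r - B) / (2 * A)) * 1 + D * 1 ^+ 2).
have -> : A * ((r - B) / (2 * A)) ^+ 2 + B * ((r - B) / (2 * A)) * 1 + D * 1 ^+ 2
   = (r ^+ 2 - (B ^+ 2 - 4 * A * D)) / (4 * A).
  by field.
by rewrite hr subrr mul0r.
Qed.

Lemma main_gen (U : 'M[C]_(2 * 2)) (beta : 'cV[C]_2) :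
  U \is unitarymx -> unit_vec beta ->
  exists (alpha : 'cV[C]_2) (alpha' beta' : 'M[C]_2),
    [/\ unit_vec alpha, density alpha', density beta' &
        U *m (ketbra alpha *t ketbra beta) *m adj U = alpha' *t beta'].
Proof.
move=> hU hb.
have hU' : adj U *m U = 1%:M.
  by have := trmxC_unitary U; rewrite hU => /unitarymxP; rewrite trmxCK.
pose e0 := vec2 (1 : C) 0; pose e1 := vec2 (0 : C) 1.
pose p := U *m (e0 *t beta); pose q := U *m (e1 *t beta).
pose y (v : 'cV[C]_(2*2)) (i j : 'I_2) := v (mxtens_index (i,j)) 0.
pose dA := y p 0 0 * y p 1 1 - y p 0 1 * y p 1 0.
pose dC := y q 0 0 * y q 1 1 - y q 0 1 * y q 1 0.
pose dB := y p 0 0 * y q 1 1 + y q 0 0 * y p 1 1 - y p 0 1 * y q 1 0 - y q 0 1 * y p 1 0.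
have [s [t [hst hq]]] := quad_root dA dB dC.
pose n := s * s^* + t * t^*.
have n0 : 0 < n.
  rewrite lt_def paddr_eq0 ?mul_conjC_ge0 // !mul_conjC_eq0 negb_and hst.
  by rewrite addr_ge0 ?mul_conjC_ge0.
pose k := (sqrtC n)^-1.
have k0 : 0 <= k by rewrite invr_ge0 sqrtC_ge0 ltW.
have kn : k * k * n = 1.
  by rewrite /k -invfM -expr2 sqrtCK mulVf // gt_eqF.
pose alpha := vec2 (k * s) (k * t).
have ua : unit_vec alpha.
  have ck : k^* = k := geC0_conj k0.
  have cks : forall z, (k * z)^* = k * z^* by move=> z; rewrite rmorphM /= ck.
  rewrite /unit_vec mxE !big_ord_recl big_ord0 /adj !mxE /= !cks.
  rewrite -kn /n; clearbody k; ring.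
have ha : alpha = (k * s) *: e0 + (k * t) *: e1.
  apply/matrixP => i j; rewrite [j]ord1; case: (ord2 i) => ->; rewrite !mxE /=; ring.
pose w := U *m (alpha *t beta).
have hw : w = (k * s) *: p + (k * t) *: q.
  by rewrite /w ha tensDl !tensZl mulmxDr !scalemxAr.
have hdet : y w 0 0 * y w 1 1 = y w 0 1 * y w 1 0.
  have E : forall i j, y w i j = k * s * y p i j + k * t * y q i j.
    by move=> i j; rewrite /y hw !mxE.
  rewrite !E; apply/eqP; rewrite -subr_eq0; apply/eqP.
  transitivity (k ^+ 2 * (dA * s ^+ 2 + dB * s * t + dC * t ^+ 2)).
    by rewrite /dA /dB /dC; ring.
  by rewrite hq mulr0.
have [a [b hab]] := decomp hdet.
rewrite /unit_vec in hb.
have nw : (adj w *m w) 0 0 = 1.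
  rewrite /w adj_mul -mulmxA (mulmxA (adj U)) hU' mul1mx adj_tens tensmx_mul tens11.
  by rewrite ua hb mulr1.
have nab : (adj a *m a) 0 0 * (adj b *m b) 0 0 = 1.
  by rewrite -tens11 -tensmx_mul -adj_tens -hab.
exists alpha, ((adj b *m b) 0 0 *: ketbra a), ((adj a *m a) 0 0 *: ketbra b); split.
- exact: ua.
- by apply: density_scale; [exact: norm_ge0 | rewrite mulrC].
- by apply: density_scale; [exact: norm_ge0 | done].
rewrite tensZ mulrC nab scale1r -ketbra_tens -ketbra_mul -/w hab ketbra_tens //.
Qed.

End G.

Local Open Scope complex_scope.

Theorem theorem6 (R : realType) (U : 'M[R[i]]_(2 * 2)) (beta : 'cV[R[i]]_2) :
  U \is unitarymx -> unit_vec beta ->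
  exists (alpha : 'cV[R[i]]_2) (alpha' beta' : 'M[R[i]]_2),
    [/\ unit_vec alpha, density alpha', density beta' &
        U *m (ketbra alpha *t ketbra beta) *m adj U = alpha' *t beta'].
Proof. exact: main_gen. Qed.
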